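(* Let $(X,d,\mu)$ be a space of homogeneous type, $1\leq r<\infty$, $q=2r-1$. If $u\in RH_{q}$ and $u^{r}\in A_{\infty}$, then for $s=1+\frac{1}{2\tau[u^{r}]_{A_{\infty}}}$, every cube $Q$ of a dyadic system and every measurable subset $E\subset Q$, $$\frac{u^{sr}(E)}{u^{sr}(c_{d}Q)}\lesssim[u]_{RH_{q}}^{q/4}\left(\frac{u(E)}{u(c_{d}Q)}\right)^{\frac{1}{4}}.$$
   Context: Space of homogeneous type: quasi-metric $d$, doubling Borel measure $\mu$. Dyadic system with parameters $c_0\le C_0$, $\delta$: cubes $Q=Q^k_j$ with $B(z^k_j,c_0\delta^k)\subset Q\subset B(z^k_j,C_0\delta^k)$; dilation $\alpha Q:=B(z^k_j,\alpha C_0\delta^k)$ for $\alpha\ge1$ (a ball). $w\in RH_q$ means $\big(\frac{w^q(B)}{\mu(B)}\big)^{1/q}\le[w]_{RH_q}\frac{w(c_dB)}{\mu(c_dB)}$ for all balls $B$, with $c_d\ge1$ a fixed constant depending on $X$. $[w]_{A_\infty}=\sup_B\frac1{w(B)}\int_BM(\chi_Bw)$. $\tau>0$ is the constant (depending on $X$) of the sharp reverse Hölder inequality: if $w\in A_\infty$ and $1\le t\le1+\frac1{\tau[w]_{A_\infty}}$ then $\big(\frac{w^t(B)}{\mu(B)}\big)^{1/t}\le c\frac{w(c_dB)}{\mu(c_dB)}$. Implicit constants depend only on $X$ and the dyadic system. *)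

(* Defs.v *)
From HB Require Import structures.
From mathcomp Require Import all_boot all_order all_algebra.
From mathcomp Require Import all_classical all_reals all_analysis.
Set Implicit Arguments. Unset Strict Implicit. Unset Printing Implicit Defensive.
Import Order.TTheory GRing.Theory Num.Theory.
Local Open Scope classical_set_scope.
Local Open Scope ring_scope.

Definition qball {R : realType} {T : Type} (dist : T -> T -> R) (x : T) (rho : R)
  : set T := [set y | dist x y < rho].

Definition homogeneous_type {R : realType} {dsp : measure_display}
  {T : measurableType dsp} (dist : T -> T -> R)
  (mu : {measure set T -> \bar R}) : Prop :=
  (forall x y, 0 <= dist x y) /\
  (forall x y, dist x y = 0 <-> x = y) /\
  (forall x y, dist x y = dist y x) /\
  (exists K : R, 1 <= K /\ forall x y z, dist x y <= K * (dist x z + dist z y)) /\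
  (forall x rho, measurable (qball dist x rho)) /\
  (forall x rho, 0 < rho ->
     (0 < mu (qball dist x rho))%E /\ (mu (qball dist x rho) < +oo)%E) /\
  (exists Cmu : R, forall x rho, 0 < rho ->
     (mu (qball dist x (2 * rho)) <= Cmu%:E * mu (qball dist x rho))%E).

Definition wmeas {R : realType} {dsp : measure_display} {T : measurableType dsp}
  (mu : {measure set T -> \bar R}) (w : T -> R) (E : set T) : \bar R :=
  (\int[mu]_(x in E) (w x)%:E)%E.

Definition fpow {R : realType} {T : Type} (w : T -> R) (p : R) : T -> R :=
  fun x => powR (w x) p.

Definition weight {R : realType} {dsp : measure_display} {T : measurableType dsp}
  (dist : T -> T -> R) (mu : {measure set T -> \bar R}) (w : T -> R) : Prop :=
  [/\ (forall x, 0 <= w x),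
      measurable_fun setT w,
      (forall x rho, 0 < rho -> (wmeas mu w (qball dist x rho) < +oo)%E) &
      {ae mu, forall x, 0 < w x}].

Definition RHconst {R : realType} {dsp : measure_display} {T : measurableType dsp}
  (dist : T -> T -> R) (mu : {measure set T -> \bar R}) (cd q : R) (w : T -> R)
  : \bar R :=
  ereal_sup [set ((wmeas mu (fpow w q) (qball dist x rho) / mu (qball dist x rho))
                    `^ (1 / q)
                  / (wmeas mu w (qball dist x (cd * rho))
                     / mu (qball dist x (cd * rho))))%E
            | x in [set: T] & rho in [set rho : R | 0 < rho]].

Definition maximal {R : realType} {dsp : measure_display} {T : measurableType dsp}
  (dist : T -> T -> R) (mu : {measure set T -> \bar R}) (f : T -> R) (x : T)
  : \bar R :=
  ereal_sup [set a | exists (z : T) (rho : R), 0 < rho /\ qball dist z rho x /\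
              a = ((\int[mu]_(y in qball dist z rho) (`|f y|)%:E)
                   / mu (qball dist z rho))%E].

Definition Ainfconst {R : realType} {dsp : measure_display} {T : measurableType dsp}
  (dist : T -> T -> R) (mu : {measure set T -> \bar R}) (w : T -> R) : \bar R :=
  ereal_sup [set ((\int[mu]_(y in qball dist x rho)
                     maximal dist mu (fun z => (\1_(qball dist x rho) z * w z)%R) y)
                  / wmeas mu w (qball dist x rho))%E
            | x in [set: T] & rho in [set rho : R | 0 < rho]].

Definition in_RH {R : realType} {dsp : measure_display} {T : measurableType dsp}
  (dist : T -> T -> R) (mu : {measure set T -> \bar R}) (cd q : R) (w : T -> R)
  : Prop := weight dist mu w /\ (RHconst dist mu cd q w < +oo)%E.

Definition in_Ainf {R : realType} {dsp : measure_display} {T : measurableType dsp}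
  (dist : T -> T -> R) (mu : {measure set T -> \bar R}) (w : T -> R) : Prop :=
  weight dist mu w /\ (Ainfconst dist mu w < +oo)%E.

(* The sharp reverse Hoelder inequality with constants tau, c (depending on X):
   if w in A_infty and 1 <= t <= 1 + 1/(tau [w]_{A_infty}) then
   (w^t(B)/mu(B))^{1/t} <= c w(c_d B)/mu(c_d B) for all balls B. *)
Definition sharp_RH {R : realType} {dsp : measure_display} {T : measurableType dsp}
  (dist : T -> T -> R) (mu : {measure set T -> \bar R}) (cd tau c : R) : Prop :=
  forall w : T -> R, in_Ainf dist mu w ->
  forall t : R, 1 <= t -> t <= 1 + 1 / (tau * fine (Ainfconst dist mu w)) ->
  forall x rho, 0 < rho ->
  (((wmeas mu (fpow w t) (qball dist x rho) / mu (qball dist x rho)) `^ (1 / t))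
   <= c%:E * (wmeas mu w (qball dist x (cd * rho)) / mu (qball dist x (cd * rho))))%E.

Definition dyadic_system {R : realType} {dsp : measure_display} {T : measurableType dsp}
  (dist : T -> T -> R) (c0 C0 delta : R) (I : Type)
  (cube : int -> I -> set T) (centre : int -> I -> T) : Prop :=
  0 < c0 /\ c0 <= C0 /\ 0 < delta /\ delta < 1 /\
      (forall k j, measurable (cube k j)) /\
      (forall k, forall x, exists j, cube k j x) /\
      (forall k i j, cube k i `&` cube k j !=set0 -> cube k i = cube k j) /\
      (forall k l i j, (k <= l)%R ->
         cube l i `<=` cube k j \/ cube l i `&` cube k j = set0) /\
      (forall k j, qball dist (centre k j) (c0 * delta ^ k) `<=` cube k j /\
                   cube k j `<=` qball dist (centre k j) (C0 * delta ^ k)).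

(* dilation alpha Q := B(z^k_j, alpha C0 delta^k) *)
Definition dil_cube {R : realType} {T : Type} (dist : T -> T -> R) (C0 delta : R)
  (I : Type) (centre : int -> I -> T) (alpha : R) (k : int) (j : I) : set T :=
  qball dist (centre k j) (alpha * C0 * delta ^ k).

(* Main.v *)
Require Import Defs.
From HB Require Import structures.
From mathcomp Require Import all_boot all_order all_algebra.
From mathcomp Require Import all_classical all_reals all_analysis.
From mathcomp Require Import measurable_realfun.
From mathcomp Require Import ring lra.
Import Order.TTheory GRing.Theory Num.Theory.
Import numFieldTopology.Exports.
Local Open Scope classical_set_scope.
Local Open Scope ring_scope.
Set Implicit Arguments.
Unset Strict Implicit.
Local Open Scope ereal_scope.

Lemma le_int_nn (R : realType) (dd : measure_display) (T : measurableType dd)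
  (mu : {measure set T -> \bar R}) (D : set T) (f g : T -> \bar R) :
  (forall x, D x -> 0 <= f x) -> (forall x, D x -> f x <= g x) ->
  \int[mu]_(x in D) f x <= \int[mu]_(x in D) g x.
Proof.
move=> f0 fg.
have g0 : forall x, D x -> 0 <= g x by move=> x Dx; exact: le_trans (f0 x Dx) (fg x Dx).
rewrite (ge0_integralE _ f0) (ge0_integralE _ g0) /=.
apply: ereal_sup_le => _ [h hf <-]; exists h => //= x.
apply: (le_trans (hf x)); rewrite /patch; case: ifP => // /set_mem Dx; exact: fg.
Qed.

Lemma mEF (R : realType) (dd : measure_display) (T : measurableType dd) (D : set T) (f : T -> R) :
 measurable_fun setT f -> measurable_fun D (EFin \o f).
Proof. move=> mf. apply: measurable_funTS. by apply/measurable_EFinP. Qed.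

Lemma int_gt0 (R : realType) (dd : measure_display) (T : measurableType dd)
  (mu : {measure set T -> \bar R}) (D : set T) (f : T -> R) :
  measurable D -> 0 < mu D -> measurable_fun setT f -> (forall x, (0 <= f x)%R) ->
  {ae mu, forall x, (0 < f x)%R} -> 0 < \int[mu]_(x in D) (f x)%:E.
Proof.
move=> mD muD mf f0 fpos.
rewrite lt0e integral_ge0 ?andbT; last by move=> x _; rewrite lee_fin.
apply/eqP => h.
have mfD := @mEF _ _ _ D _ mf.
have : \int[mu]_(x in D) `|(EFin \o f) x| = 0.
  by rewrite -h; apply: eq_integral => x _ /=; rewrite ger0_norm.
move/(ae_eq_integral_abs mu mD mfD) => hae.
have : {ae mu, forall x, ~ D x}.
  apply: filterS2 hae fpos => x /= H1 H2 Dx.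
  by have := H1 Dx => -[] fx0; move: H2; rewrite fx0 ltxx.
case=> N [mN muN DN].
have DsN : D `<=` N by move=> x Dx; apply: DN => /=; apply.
have H : mu D <= mu N by apply: le_measure => //; rewrite inE.
by rewrite muN in H; move: (lt_le_trans muD H); rewrite ltxx.
Qed.

Lemma mPatch (R : realType) (dd : measure_display) (T : measurableType dd) (D : set T) (f : T -> R) :
 measurable D -> measurable_fun setT f -> measurable_fun setT (f \_ D).
Proof. by move=> mD mf; apply/(measurable_restrictT _ mD); exact: measurable_funTS. Qed.

Lemma hoelderD (R : realType) (dd : measure_display) (T : measurableType dd)
  (mu : {measure set T -> \bar R}) (D : set T) (f g : T -> R) (p q : R) :
  measurable D -> measurable_fun setT f -> measurable_fun setT g ->
  (forall x, (0 <= f x)%R) -> (forall x, (0 <= g x)%R) ->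
  (0 < p)%R -> (0 < q)%R -> (p^-1 + q^-1 = 1)%R ->
  \int[mu]_(x in D) (f x * g x)%:E <=
    (\int[mu]_(x in D) (f x `^ p)%:E) `^ p^-1 *
    (\int[mu]_(x in D) (g x `^ q)%:E) `^ q^-1.
Proof.
move=> mD mf mg f0 g0 p0 q0 pq.
have mfD := @mPatch _ _ _ _ _ mD mf.
have mgD := @mPatch _ _ _ _ _ mD mg.
have := hoelder mu mfD mgD p0 q0 pq.
have NE (h : T -> R) (r : R) : (0 < r)%R -> (forall x, (0 <= h x)%R) ->
    Lnorm mu r%:E (EFin \o (h \_ D)) = (\int[mu]_(x in D) (h x `^ r)%:E) `^ r^-1.
  move=> r0 h0; rewrite unlock; congr (_ `^ _); rewrite [RHS]integral_mkcond.
  apply: eq_integral => x _ /=; rewrite /patch; case: ifP => _ /=.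
    by rewrite ger0_norm // poweR_EFin.
  by rewrite /point /= normr0 powR0 // gt_eqF.
rewrite !NE // Lnorm1 => H; apply: le_trans H; rewrite le_eqVlt; apply/orP; left; apply/eqP; rewrite integral_mkcond.
apply: eq_integral => x _ /=; rewrite /patch; case: ifP => _ /=.
  by rewrite ger0_norm // mulr_ge0.
by rewrite /point /= mulr0 normr0.
Qed.

Lemma fin_le (R : realType) (Y : \bar R) (z : R) :
  0 <= Y -> Y <= z%:E -> exists y : R, Y = y%:E /\ (0 <= y)%R /\ (y <= z)%R.
Proof.
case: Y => [y| |] //= y0 yz.
by exists y; rewrite -!lee_fin.
Qed.

Lemma fin_lt (R : realType) (Y : \bar R) :
  0 <= Y -> Y < +oo -> exists y : R, Y = y%:E /\ (0 <= y)%R.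
Proof.
case: Y => [y| |] //= y0 _; by exists y; rewrite -!lee_fin.
Qed.

Lemma from_pow (R : realType) (Y : \bar R) (m p Z : R) :
  0 <= Y -> (0 < m)%R -> (0 < p)%R -> (0 <= Z)%R ->
  (Y / m%:E) `^ (1 / p) <= Z%:E ->
  exists y : R, Y = y%:E /\ (0 <= y)%R /\ (y <= m * Z `^ p)%R.
Proof.
move=> Y0 m0 p0 Z0.
have p1 : (1 / p != 0)%R by rewrite div1r invr_eq0 gt_eqF.
rewrite inver gt_eqF //.
case: Y Y0 => [y| |] //= y0.
  rewrite lee_fin => H.
  exists y; split => //; split; first by rewrite -lee_fin.
  have ym0 : (0 <= y * m^-1)%R by rewrite mulr_ge0 // ?invr_ge0 ?ltW // -lee_fin.
  have := ge0_ler_powR (ltW p0) _ _ H.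
  rewrite -powRrM mul1r mulVf ?gt_eqF // powRr1 //.
  rewrite !nnegrE powR_ge0 => /(_ isT Z0).
  by rewrite ler_pdivrMr // mulrC.
rewrite gt0_mulye ?lte_fin ?invr_gt0 // poweRyr // leNgt ltey.
Qed.

Lemma jensenD (R : realType) (dd : measure_display) (T : measurableType dd)
  (mu : {measure set T -> \bar R}) (D : set T) (h : T -> R) (p : R) :
  measurable D -> measurable_fun setT h -> (forall x, (0 <= h x)%R) -> (1 <= p)%R ->
  \int[mu]_(x in D) (h x)%:E <=
    (\int[mu]_(x in D) (h x `^ p)%:E) `^ p^-1 * (mu D) `^ (1 - p^-1).
Proof.
move=> mD mh h0 p1.
have [->|pn1] := eqVneq p 1%R.
  rewrite invr1 subrr poweRe0 mule1 poweRe1; last by apply: integral_ge0 => x _; rewrite lee_fin powR_ge0.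
  by rewrite le_eqVlt; apply/orP; left; apply/eqP; apply: eq_integral => x _; rewrite powRr1.
have p1' : (1 < p)%R by rewrite lt_neqAle eq_sym pn1.
have p0 : (0 < p)%R by apply: lt_trans p1'.
pose q := (p / (p - 1))%R.
have q0 : (0 < q)%R by rewrite divr_gt0 // subr_gt0.
have pq : (p^-1 + q^-1 = 1)%R.
  by rewrite /q invf_div; field; rewrite gt_eqF.
have := @hoelderD _ _ _ mu D h (fun=> 1%R) p q mD mh (@measurable_cst _ _ T R setT 1%R) h0 (fun=> ler01) p0 q0 pq.
under eq_integral => x _ do rewrite mulr1.
rewrite (_ : \int[mu]_(x in D) ((1 `^ q)%:E) = mu D); last first.
  rewrite (_ : (fun x => ((1:R) `^ q)%:E) = cst 1%:E); last by apply/funext => x; rewrite powR1.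
  by rewrite integral_cst // mul1e.
by rewrite (_ : q^-1 = 1 - p^-1)%R // -pq addrC addKr.
Qed.

Lemma Ainf_ge1 (R : realType) (dd : measure_display) (T : measurableType dd)
  (dist : T -> T -> R) (mu : {measure set T -> \bar R}) (w : T -> R) (x : T) (rho : R) :
  (0 < rho)%R -> measurable (qball dist x rho) -> 0 < mu (qball dist x rho) ->
  mu (qball dist x rho) < +oo -> (forall y, (0 <= w y)%R) ->
  0 < wmeas mu w (qball dist x rho) -> wmeas mu w (qball dist x rho) < +oo ->
  Ainfconst dist mu w < +oo -> (1 <= fine (Ainfconst dist mu w))%R.
Proof.
set B := qball dist x rho => rho0 mB muB0 muBoo w0 W0 Woo Aoo.
have [Wb [hWb Wb0]] := fin_lt (ltW W0) Woo.
have [mb [hmb mb0]] := fin_lt (ltW muB0) muBoo.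
have Wbp : (0 < Wb)%R by rewrite -lte_fin -hWb.
have mbp : (0 < mb)%R by rewrite -lte_fin -hmb.
have M : forall y, B y -> (Wb / mb)%:E <= maximal dist mu (fun z => \1_B z * w z)%R y.
  move=> y By; apply: ereal_sup_ubound; exists x, rho; split => //; split => //.
  rewrite -/B hmb (_ : \int[mu]_(y0 in B) (`|\1_B y0 * w y0|)%:E = Wb%:E).
    by rewrite inver gt_eqF.
  rewrite -hWb; apply: eq_integral => y' /[!inE] By'.
  by rewrite indicE mem_set // mul1r ger0_norm.
have I : Wb%:E <= \int[mu]_(y in B) maximal dist mu (fun z => \1_B z * w z)%R y.
  have := @le_int_nn _ _ _ mu B (cst (Wb / mb)%:E) (maximal dist mu (fun z => \1_B z * w z)%R).
  rewrite integral_cst // hmb -EFinM mulfVK ?gt_eqF //; apply.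
    by move=> y _; rewrite lee_fin divr_ge0.
  exact: M.
have X : 1 <= (\int[mu]_(y in B) maximal dist mu (fun z => \1_B z * w z)%R y) / wmeas mu w B.
  rewrite hWb inver gt_eqF // (_ : 1 = Wb%:E * (Wb^-1)%:E); last by rewrite -EFinM mulfV ?gt_eqF.
  by apply: lee_wpmul2r => //; rewrite lee_fin invr_ge0 ltW.
have A1 : 1 <= Ainfconst dist mu w.
  apply: (le_trans X); apply: ereal_sup_ubound.
  by exists x => //; exists rho.
have [a [ha a0]] := fin_lt (le_trans lee01 A1) Aoo.
by rewrite ha /= -lee_fin -ha.
Qed.

Lemma mfpow (R : realType) (dd : measure_display) (T : measurableType dd) (u : T -> R) (p : R) :
  measurable_fun setT u -> measurable_fun setT (fpow u p).
Proof. by move=> mu_; exact: measurableT_comp (measurable_powR p) mu_. Qed.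

Lemma fpow_ge0 (R : realType) (T : Type) (u : T -> R) (p : R) x : (0 <= fpow u p x)%R.
Proof. exact: powR_ge0. Qed.

Lemma wmeas_ge0 (R : realType) (dd : measure_display) (T : measurableType dd)
  (mu : {measure set T -> \bar R}) (w : T -> R) (D : set T) :
  (forall x, (0 <= w x)%R) -> 0 <= wmeas mu w D.
Proof. by move=> w0; apply: integral_ge0 => x _; rewrite lee_fin. Qed.

Lemma fpowM (R : realType) (T : Type) (u : T -> R) (a b : R) :
  fpow (fpow u a) b = fpow u (a * b).
Proof. by apply/funext => x; rewrite /fpow powRrM. Qed.

Lemma int_fpow_pow (R : realType) (dd : measure_display) (T : measurableType dd)
  (mu : {measure set T -> \bar R}) (D : set T) (u : T -> R) (a b c : R) :
  (a * b = c)%R -> \int[mu]_(x in D) ((fpow u a x) `^ b)%:E = wmeas mu (fpow u c) D.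
Proof. by move=> abc; apply: eq_integral => x _; rewrite /fpow -powRrM abc. Qed.

Lemma int_fpow_mul (R : realType) (dd : measure_display) (T : measurableType dd)
  (mu : {measure set T -> \bar R}) (D : set T) (u : T -> R) (a b : R) :
  (0 < a + b)%R -> \int[mu]_(x in D) (fpow u a x * fpow u b x)%:E = wmeas mu (fpow u (a + b)) D.
Proof. by move=> ab; apply: eq_integral => x _; rewrite /fpow -powRD // gt_eqF. Qed.

Lemma fpow1 (R : realType) (T : Type) (u : T -> R) :
  (forall x, (0 <= u x)%R) -> fpow u 1 = u.
Proof. by move=> u0; apply/funext => x; rewrite /fpow powRr1. Qed.

Lemma lnle (R : realType) (x y : R) : (0 < x)%R -> (x <= y)%R -> (ln x <= ln y)%R.
Proof. by move=> x0 xy; rewrite ler_ln ?posrE // (lt_le_trans x0 xy). Qed.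

Lemma pos2 (R : realType) (x a b p q : R) : (0 < x)%R -> (0 <= a)%R -> (0 <= b)%R ->
  p != 0%R -> q != 0%R -> (x <= a `^ p * b `^ q)%R -> (0 < a)%R /\ (0 < b)%R.
Proof.
move=> x0 a0 b0 p0 q0 H; split; rewrite lt_neqAle ?a0 ?b0 andbT; apply/eqP => E; move: H;
  rewrite -E powR0 // ?mul0r ?mulr0 => H; move: (lt_le_trans x0 H); by rewrite ltxx.
Qed.

Local Close Scope ereal_scope.
Theorem lemma3p9 (R : realType) (dsp : measure_display) (T : measurableType dsp)
  (dist : T -> T -> R) (mu : {measure set T -> \bar R}) (cd tau c : R)
  (c0 C0 delta : R) (I : Type) (cube : int -> I -> set T) (centre : int -> I -> T) :
  homogeneous_type dist mu -> 1 <= cd -> 0 < tau -> 0 < c ->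
  sharp_RH dist mu cd tau c ->
  dyadic_system dist c0 C0 delta cube centre ->
  exists C : R, 0 < C /\
  forall (r : R) (u : T -> R), 1 <= r ->
  let q := 2 * r - 1 in
  in_RH dist mu cd q u -> in_Ainf dist mu (fpow u r) ->
  let s := 1 + 1 / (2 * tau * fine (Ainfconst dist mu (fpow u r))) in
  forall (k : int) (j : I) (E : set T), measurable E -> E `<=` cube k j ->
  (wmeas mu (fpow u (s * r)) E
     / wmeas mu (fpow u (s * r)) (dil_cube dist C0 delta centre cd k j)
   <= C%:E * (RHconst dist mu cd q u) `^ (q / 4)
        * (wmeas mu u E / wmeas mu u (dil_cube dist C0 delta centre cd k j)) `^ (1 / 4))%E.
Proof.
move=> hX cd1 tau0 cpos srh dys.
exists ((Num.max 1 c) `^ ((1 + tau^-1) / 2)); split.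
  by apply: powR_gt0; rewrite lt_max ltr01.
move=> r u r1 q uRH uA s k j E mE EQ.
case: hX => d0 [deq [dsym [_ [mball [muball _]]]]].
case: dys => c00 [c0C0 [del0 [_ [_ [_ [_ [_ hball]]]]]]].
case: uRH => -[u0 mu_ uloc uae] Kfin.
case: (uA) => -[w0 mw wloc wae] Afin.
have r0 : (0 < r)%R by apply: lt_le_trans r1.
have rho0 : (0 < C0 * delta ^ k)%R.
  by rewrite mulr_gt0 ?exprz_gt0 // (lt_le_trans c00 c0C0).
rewrite /dil_cube -mulrA.
set z := centre k j.
set rho := (C0 * delta ^ k)%R.
have cdr0 : (0 < cd * rho)%R by rewrite mulr_gt0 // (lt_le_trans ltr01 cd1).
set B := qball dist z rho.
set Bs := qball dist z (cd * rho).
have EB : E `<=` B by apply: (subset_trans EQ); exact: (hball k j).2.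
have BBs : B `<=` Bs.
  move=> y; rewrite /B /Bs /qball /= => hy; apply: (lt_le_trans hy).
  by rewrite ler_peMl // ltW.
have mB : measurable B by exact: mball.
have mBs : measurable Bs by exact: mball.
have [m [hm m0]] : exists m, mu B = m%:E /\ (0 < m)%R.
  have [h1 h2] := muball z rho rho0.
  have [m' [hm' _]] := fin_lt (ltW h1) h2.
  by exists m'; split => //; rewrite -lte_fin -hm'.
have [ms [hms ms0]] : exists m, mu Bs = m%:E /\ (0 < m)%R.
  have [h1 h2] := muball z (cd * rho)%R cdr0.
  have [m' [hm' _]] := fin_lt (ltW h1) h2.
  by exists m'; split => //; rewrite -lte_fin -hm'.
have mmB : (m <= ms)%R.
  by rewrite -lee_fin -hm -hms; apply: le_measure => //; rewrite inE.
have [Us [hUs Us0]] : exists U, wmeas mu u Bs = U%:E /\ (0 < U)%R.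
  have muBs0 : (0 < mu Bs)%E by rewrite hms lte_fin.
  have h1 := int_gt0 mBs muBs0 mu_ u0 uae.
  have [U [hU _]] := fin_lt (ltW h1) (uloc z _ cdr0).
  by exists U; split => //; rewrite -lte_fin -hU.
have [UE [hUE UE0]] : exists U, wmeas mu u E = U%:E /\ (0 <= U)%R.
  apply: fin_lt; first exact: wmeas_ge0.
  apply: (le_lt_trans _ (uloc z _ cdr0)).
  by apply: ge0_subset_integral => //; [exact: mEF | move=> x _; rewrite lee_fin | exact: subset_trans BBs].
have uposae : forall p, {ae mu, forall x, (0 < fpow u p x)%R}.
  by move=> p; apply: filterS uae => x ux; exact: powR_gt0.
have tA1 : (1 <= fine (Ainfconst dist mu (fpow u r)))%R.
  have [h1 h2] := muball z rho rho0.
  apply: (@Ainf_ge1 _ _ _ dist mu (fpow u r) z rho) => //.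
  - exact: int_gt0 (uposae r).
  - exact: wloc.
set tA := fine (Ainfconst dist mu (fpow u r)).
have tA0 : (0 < tA)%R by apply: lt_le_trans tA1.
have s1 : (1 <= s)%R.
  by rewrite /s lerDl divr_ge0 // ltW // mulr_gt0 // mulr_gt0.
have sle : (s <= 1 + 1 / (tau * tA))%R.
  rewrite /s lerD2l !div1r lef_pV2 ?posrE ?mulr_gt0 //.
  rewrite -/tA -mulrA ler_peMl //; [exact: ltW (mulr_gt0 tau0 tA0) | lra].
set t := (2 * s - 1)%R.
have ht : t = (1 + 1 / (tau * tA))%R.
  rewrite /t /s -/tA; field; apply/andP; split; rewrite gt_eqF //.
have t1 : (1 <= t)%R by rewrite ht lerDl divr_ge0 // ltW // mulr_gt0.
have tle : (t <= 1 + tau^-1)%R.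
  rewrite ht lerD2l div1r lef_pV2 ?posrE ?mulr_gt0 //.
  by rewrite ler_peMr // ltW.
have s0 : (0 < s)%R by apply: lt_le_trans s1.
have t0 : (0 < t)%R by apply: lt_le_trans t1.
have [Wrs [hWrs Wrs0]] : exists W, wmeas mu (fpow u r) Bs = W%:E /\ (0 < W)%R.
  have muBs0 : (0 < mu Bs)%E by rewrite hms lte_fin.
  have h1 := int_gt0 mBs muBs0 (mfpow r mu_) (@fpow_ge0 _ _ u r) (uposae r).
  have [U [hU _]] := fin_lt (ltW h1) (wloc z _ cdr0).
  by exists U; split => //; rewrite -lte_fin -hU.
have [Wt [hWt /andP[Wt0 WtB]]] : exists W, wmeas mu (fpow u (r * t)) B = W%:E /\ ((0 <= W) && (W <= m * (c * (Wrs / ms)) `^ t))%R.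
  have := srh (fpow u r) uA t t1 (ltac:(by rewrite ht)) z rho rho0.
  rewrite fpowM -/B -/Bs hm hWrs hms (inver ms) (gt_eqF ms0) -!EFinM.
  move=> H; have Z0 : (0 <= c * (Wrs / ms))%R by apply: mulr_ge0; [exact: ltW | apply: divr_ge0; exact: ltW].
  have [W [hW [W0 HW]]] := from_pow (@wmeas_ge0 _ _ _ mu (fpow u (r * t)) B (@fpow_ge0 _ _ u _)) m0 t0 Z0 H.
  by exists W; rewrite hW W0 HW.
have [Ss [hSs Ss0]] : exists S, wmeas mu (fpow u (s * r)) Bs = S%:E /\ (0 < S)%R.
  have cdr1 : (0 < cd * (cd * rho))%R by rewrite mulr_gt0 // (lt_le_trans ltr01 cd1).
  have [h1 h2] := muball z _ cdr1.
  have [m2 [hm2 _]] := fin_lt (ltW h1) h2.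
  have m20 : (0 < m2)%R by rewrite -lte_fin -hm2.
  have [W2 [hW2 W20]] := fin_lt (@wmeas_ge0 _ _ _ mu (fpow u r) (qball dist z (cd * (cd * rho))) (@fpow_ge0 _ _ u r)) (wloc z _ cdr1).
  have := srh (fpow u r) uA s s1 sle z (cd * rho)%R cdr0.
  rewrite fpowM -/Bs hms hm2 hW2 (inver m2) (gt_eqF m20) -!EFinM => H.
  have Z0 : (0 <= c * (W2 / m2))%R by apply: mulr_ge0; [exact: ltW | apply: divr_ge0 => //; exact: ltW].
  have [S [hS [S0 _]]] := from_pow (@wmeas_ge0 _ _ _ mu (fpow u (r * s)) Bs (@fpow_ge0 _ _ u _)) ms0 s0 Z0 H.
  exists S; split; first by rewrite mulrC.
  have muBs0 : (0 < mu Bs)%E by rewrite hms lte_fin.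
  have := int_gt0 mBs muBs0 (mfpow (r * s) mu_) (@fpow_ge0 _ _ u _) (uposae _).
  by rewrite -/(wmeas mu _ _) hS lte_fin.
have q1 : (1 <= q)%R by rewrite /q; lra.
have q0 : (0 < q)%R by apply: lt_le_trans q1.
have Usms0 : (0 < Us / ms)%R by rewrite divr_gt0.
have Kel : (((wmeas mu (fpow u q) B / mu B) `^ (1/q)) / (wmeas mu u Bs / mu Bs)
    <= RHconst dist mu cd q u)%E.
  by apply: ereal_sup_ubound; exists z => //; exists rho.
rewrite [in X in (_ / X <= _)%E]hUs [in X in (_ / X <= _)%E]hms (inver ms) (gt_eqF ms0) -EFinM
  (inver (Us / ms)) (gt_eqF Usms0) hm in Kel.
have iv0 : (0 <= ((Us / ms)^-1)%:E)%E by rewrite lee_fin invr_ge0 ltW.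
have [Kr [hK Kr0]] := fin_lt (le_trans (mule_ge0 (poweR_ge0 _ _) iv0) Kel) Kfin.
rewrite hK in Kel.
have usm0 : (0 <= (Us / ms)%:E)%E by rewrite lee_fin ltW.
have Kel2 := lee_wpmul2r usm0 Kel.
rewrite -muleA -EFinM mulVf ?gt_eqF // mule1 -EFinM in Kel2.
have [Uq [hUq [Uq0 UqB]]] := from_pow (@wmeas_ge0 _ _ _ mu (fpow u q) B (@fpow_ge0 _ _ u _)) m0 q0
  (mulr_ge0 Kr0 (ltW Usms0)) Kel2.
set e1 := (q / 3 + 2 * r * t / 3)%R.
have e10 : (0 < e1)%R.
  by rewrite /e1 addr_gt0 // divr_gt0 // mulr_gt0 // mulr_gt0.
have H2 := @hoelderD _ _ _ mu B (fpow u (q / 3)) (fpow u (2 * r * t / 3)) 3 (3 / 2) mB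
  (mfpow _ mu_) (mfpow _ mu_) (@fpow_ge0 _ _ u _) (@fpow_ge0 _ _ u _)
  (ltac:(lra)) (ltac:(lra)) (ltac:(by rewrite invf_div; field)).
rewrite int_fpow_mul // (@int_fpow_pow _ _ _ mu B u (q / 3) 3 q) ?(@int_fpow_pow _ _ _ mu B u (2 * r * t / 3) (3 / 2) (r * t)) in H2;
  [|field|field].
rewrite hUq hWt !poweR_EFin -EFinM in H2.
have [IE [hIE [IE0 IEB]]] := fin_le (@wmeas_ge0 _ _ _ mu (fpow u e1) E (@fpow_ge0 _ _ u _))
  (le_trans (ge0_subset_integral mu mE mB (mEF (mfpow e1 mu_)) (fun x _ => ltac:(by rewrite lee_fin; exact: fpow_ge0)) EB) H2).
have H1 := @hoelderD _ _ _ mu E (fpow u (1 / 4)) (fpow u (e1 * (3 / 4))) 4 (4 / 3) mE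
  (mfpow _ mu_) (mfpow _ mu_) (@fpow_ge0 _ _ u _) (@fpow_ge0 _ _ u _)
  (ltac:(lra)) (ltac:(lra)) (ltac:(by rewrite invf_div; field)).
rewrite int_fpow_mul ?(@int_fpow_pow _ _ _ mu E u (1 / 4) 4 1) ?(@int_fpow_pow _ _ _ mu E u (e1 * (3 / 4)) (4 / 3) e1) in H1;
  [|field|field|by rewrite addr_gt0 // mulr_gt0].
rewrite fpow1 // hUE hIE !poweR_EFin -EFinM in H1.
rewrite (_ : (1 / 4 + e1 * (3 / 4) = s * r)%R) in H1; last by rewrite /e1 /t /q; field.
have [SE [hSE [SE0 SEB]]] := fin_le (@wmeas_ge0 _ _ _ mu (fpow u (s * r)) E (@fpow_ge0 _ _ u _)) H1.
have J1 : (Us <= Wrs `^ r^-1 * ms `^ (1 - r^-1))%R.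
  rewrite -lee_fin EFinM -!poweR_EFin -hUs -hWrs -hms.
  exact: (@jensenD _ _ _ mu Bs u r mBs mu_ u0 r1).
have J2 : (Wrs <= Ss `^ s^-1 * ms `^ (1 - s^-1))%R.
  rewrite -lee_fin EFinM -!poweR_EFin -hWrs -hSs -hms.
  have := @jensenD _ _ _ mu Bs (fpow u r) s mBs (mfpow r mu_) (@fpow_ge0 _ _ u r) s1.
  by rewrite (@int_fpow_pow _ _ _ mu Bs u r s (s * r)) // mulrC.
rewrite hSE hSs hK hUE hUs (inver Ss) (gt_eqF Ss0) (inver Us) (gt_eqF Us0). rewrite -!EFinM // lee_fin.
all: try done.
set Cc := (Num.max 1 c `^ ((1 + tau^-1) / 2))%R.
have Cc0 : (0 < Cc)%R by apply: powR_gt0; rewrite lt_max ltr01.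
have [->|SEn0] := eqVneq SE 0%R.
  by rewrite mul0r mulr_ge0 ?powR_ge0 // mulr_ge0 ?powR_ge0 // ltW.
have SEp : (0 < SE)%R by rewrite lt_neqAle eq_sym SEn0.
have [UEp IEp] : (0 < UE)%R /\ (0 < IE)%R.
  by apply: (pos2 SEp UE0 IE0 _ _ SEB); rewrite gt_eqF //; lra.
have [Uqp Wtp] : (0 < Uq)%R /\ (0 < Wt)%R.
  by apply: (pos2 IEp Uq0 Wt0 _ _ IEB); rewrite gt_eqF //; lra.
have Krp : (0 < Kr)%R.
  rewrite lt_neqAle Kr0 andbT; apply/eqP => K0; move: UqB.
  by rewrite -K0 mul0r powR0 ?gt_eqF // mulr0 => /(lt_le_trans Uqp); rewrite ltxx.
have F1 := lnle SEp SEB.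
rewrite lnM ?posrE ?powR_gt0 // !ln_powR in F1.
have F2 := lnle IEp IEB.
rewrite lnM ?posrE ?powR_gt0 // !ln_powR in F2.
have F3 := lnle Uqp UqB.
have Kusm : (0 < Kr * (Us / ms))%R by rewrite mulr_gt0 // divr_gt0.
move: F3; rewrite lnM ?posrE ?powR_gt0 // ln_powR lnM ?posrE ?divr_gt0 //.
rewrite lnM ?posrE ?invr_gt0 // lnV ?posrE // => F3.
have F4 := lnle Wtp WtB.
have cWm : (0 < c * (Wrs / ms))%R by rewrite mulr_gt0 // divr_gt0.
move: F4; rewrite lnM ?posrE ?powR_gt0 // ln_powR lnM ?posrE ?divr_gt0 //.
rewrite lnM ?posrE ?invr_gt0 // lnV ?posrE // => F4.
have F5 := lnle Us0 J1.
rewrite lnM ?posrE ?powR_gt0 // !ln_powR in F5.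
have F6 := lnle Wrs0 J2.
rewrite lnM ?posrE ?powR_gt0 // !ln_powR in F6.
have F7 := lnle m0 mmB.
have F5' : (r * ln Us <= ln Wrs + (r - 1) * ln ms)%R.
  have := ler_wpM2l (ltW r0) F5.
  by rewrite (_ : r * (r^-1 * ln Wrs + (1 - r^-1) * ln ms) = ln Wrs + (r - 1) * ln ms)%R //;
    field; rewrite gt_eqF.
have F6' : (s * ln Wrs <= ln Ss + (s - 1) * ln ms)%R.
  have := ler_wpM2l (ltW s0) F6.
  by rewrite (_ : s * (s^-1 * ln Ss + (1 - s^-1) * ln ms) = ln Ss + (s - 1) * ln ms)%R //;
    field; rewrite gt_eqF.
have F8 : (t / 2 * ln c <= (1 + tau^-1) / 2 * ln (Num.max 1 c))%R.
  have lM : (0 <= ln (Num.max 1 c))%R by rewrite ln_ge0 // le_max lexx.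
  have lc : (ln c <= ln (Num.max 1 c))%R by apply: lnle => //; rewrite le_max lexx orbT.
  apply: (le_trans (y := t / 2 * ln (Num.max 1 c))).
    by rewrite ler_wpM2l // divr_ge0 // ltW.
  by rewrite ler_wpM2r // ler_pM2r //.
have RHSp : (0 < Cc * Kr `^ (q / 4) * (UE / Us) `^ (1 / 4))%R.
  by apply/mulr_gt0/powR_gt0; [apply/mulr_gt0/powR_gt0 | rewrite divr_gt0].
rewrite -ler_ln; [| by rewrite posrE divr_gt0 | by rewrite posrE].

have eL : ln (SE / Ss) = (ln SE - ln Ss)%R.
  by rewrite lnM ?posrE ?invr_gt0 // lnV ?posrE.
have KrP : (0 < Kr `^ (q / 4))%R by apply: powR_gt0.
have UP : (0 < (UE / Us) `^ (1 / 4))%R by apply: powR_gt0; rewrite divr_gt0.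
have eR : ln (Cc * Kr `^ (q / 4) * (UE / Us) `^ (1 / 4)) =
    ((1 + tau^-1) / 2 * ln (Num.max 1 c) + q / 4 * ln Kr + 1 / 4 * (ln UE - ln Us))%R.
  have CK : (0 < Cc * Kr `^ (q / 4))%R by rewrite mulr_gt0.
  rewrite lnM ?posrE // lnM ?posrE //.
  have Usi : (0 < Us^-1)%R by rewrite invr_gt0.
  by rewrite !ln_powR lnM ?posrE ?invr_gt0 // lnV ?posrE.
rewrite eL eR.
rewrite /t in F4 F8; rewrite /q in F3 *.
clear -F1 F2 F3 F4 F5' F6' F7 F8 tau0.
lra.

Qed.
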